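(* Let $U_n\subset C^n([a,b],\mathbb{K})$ ($a<b$) be a subspace of dimension $n+1$ and let $p_{n,0},\dots,p_{n,n}$ be a Bernstein basis of $U_n$ for $\{a,b\}$ which is locally non-negative at $\{a,b\}$. Then there exists $\delta>0$ such that $p_{n,k}'(x)<0$ for all $x\in[b-\delta,b)$ and all $k=0,\dots,n-1$, while $p_{n,k}'(x)>0$ for all $x\in(a,a+\delta]$ and all $k=1,\dots,n$. Consequently, if moreover $f_0\in U_n$ is strictly positive and $D_{f_0}U_n$ has a Bernstein basis $q_{n-1,0},\dots,q_{n-1,n-1}$ for $\{a,b\}$ which is locally non-negative at $\{a,b\}$, then the numbers $$c_k=\frac{1}{f_0(a)}\lim_{x\downarrow a}\frac{p_{n,k}'(x)}{q_{n-1,k-1}(x)}\ (k=1,\dots,n),\qquad d_k=\frac{1}{f_0(b)}\lim_{x\uparrow b}\frac{p_{n,k}'(x)}{q_{n-1,k}(x)}\ (k=0,\dots,n-1)$$ satisfy $c_k>0$ for $k=1,\dots,n$ and $d_k<0$ for $k=0,\dots,n-1$.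
   Context: A function $f\in C^m([a,b],\mathbb{K})$ has a zero of order $k$ at $c$ if $f(c)=\dots=f^{(k-1)}(c)=0$ and $f^{(k)}(c)\ne0$ (one-sided derivatives at endpoints). For an $(m+1)$-dimensional space $V\subset C^m([a,b],\mathbb{K})$, a Bernstein basis for $\{a,b\}$ is a system $p_{m,0},\dots,p_{m,m}$ in $V$ such that each $p_{m,k}$ has a zero of order exactly $k$ at $a$ and of order exactly $m-k$ at $b$. Such a basis is locally non-negative at $\{a,b\}$ if its functions are real-valued and there is $\delta>0$ with $p_{m,k}(x)\ge0$ for all $k$ and all $x\in[a,a+\delta)\cup(b-\delta,b]$. For strictly positive $f_0\in U_n$, $D_{f_0}U_n:=\{\frac{d}{dx}(f/f_0):f\in U_n\}$. (The limits defining $c_k,d_k$ exist and are non-zero.) *)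

(* Defs.v *)
From Stdlib Require Import Reals.
From Coquelicot Require Import Complex.
Open Scope R_scope.

Inductive Kfield := KR | KC.

Definition Kt (k : Kfield) : Type := match k with KR => R | KC => C end.

Definition Kzero (k : Kfield) : Kt k :=
  match k return Kt k with KR => 0%R | KC => RtoC 0 end.
Definition Kplus (k : Kfield) : Kt k -> Kt k -> Kt k :=
  match k return Kt k -> Kt k -> Kt k with KR => Rplus | KC => Cplus end.
Definition Kminus (k : Kfield) : Kt k -> Kt k -> Kt k :=
  match k return Kt k -> Kt k -> Kt k with KR => Rminus | KC => Cminus end.
Definition Kmult (k : Kfield) : Kt k -> Kt k -> Kt k :=
  match k return Kt k -> Kt k -> Kt k with KR => Rmult | KC => Cmult end.
Definition Knorm (k : Kfield) : Kt k -> R :=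
  match k return Kt k -> R with KR => Rabs | KC => Cmod end.
Definition KofR (k : Kfield) : R -> Kt k :=
  match k return R -> Kt k with KR => fun r => r | KC => RtoC end.
Definition Kscal (k : Kfield) (r : R) (v : Kt k) : Kt k := Kmult k (KofR k r) v.

Fixpoint Ksum (k : Kfield) (N : nat) (g : nat -> Kt k) : Kt k :=
  match N with
  | O => Kzero k
  | S N' => Kplus k (Ksum k N' g) (g N')
  end.

(* Functions on [a,b] are represented by total functions R -> K; only their
   values on [a,b] matter. *)

(* l is the derivative of f at x relative to [a,b]
   (one-sided at the endpoints). *)
Definition deriv_within (k : Kfield) (a b : R) (f : R -> Kt k) (x : R) (l : Kt k) : Prop :=
  forall eps, 0 < eps -> exists del, 0 < del /\
    forall y, a <= y <= b -> y <> x -> Rabs (y - x) < del ->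
      Knorm k (Kminus k (Kscal k (/ (y - x)) (Kminus k (f y) (f x))) l) < eps.

Definition cont_within (k : Kfield) (a b : R) (f : R -> Kt k) : Prop :=
  forall x, a <= x <= b -> forall eps, 0 < eps -> exists del, 0 < del /\
    forall y, a <= y <= b -> Rabs (y - x) < del ->
      Knorm k (Kminus k (f y) (f x)) < eps.

Definition Cn_tower (k : Kfield) (a b : R) (m : nat) (f : R -> Kt k)
    (D : nat -> R -> Kt k) : Prop :=
  (forall x, a <= x <= b -> D O x = f x) /\
  (forall j, (j < m)%nat -> forall x, a <= x <= b ->
       deriv_within k a b (D j) x (D (S j) x)) /\
  cont_within k a b (D m).

Definition Cn (k : Kfield) (a b : R) (m : nat) (f : R -> Kt k) : Prop :=
  exists D, Cn_tower k a b m f D.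

Definition zero_order (k : Kfield) (a b : R) (m : nat) (f : R -> Kt k) (c : R)
    (j : nat) : Prop :=
  exists D, Cn_tower k a b m f D /\ (j <= m)%nat /\
    (forall i, (i < j)%nat -> D i c = Kzero k) /\ D j c <> Kzero k.

Definition in_sp (k : Kfield) (a b : R) (V : (R -> Kt k) -> Prop) (f : R -> Kt k) : Prop :=
  exists g, V g /\ forall x, a <= x <= b -> f x = g x.

Definition subspace_Cn (k : Kfield) (a b : R) (m : nat) (V : (R -> Kt k) -> Prop) : Prop :=
  (forall f, V f -> Cn k a b m f) /\
  V (fun _ => Kzero k) /\
  (forall (al : Kt k) f g, V f -> V g ->
     V (fun x => Kplus k (Kmult k al (f x)) (g x))).

Definition has_dim (k : Kfield) (a b : R) (V : (R -> Kt k) -> Prop) (N : nat) : Prop :=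
  exists e : nat -> R -> Kt k,
    (forall i, (i < N)%nat -> V (e i)) /\
    (forall f, V f -> exists c : nat -> Kt k, forall x, a <= x <= b ->
        f x = Ksum k N (fun i => Kmult k (c i) (e i x))) /\
    (forall c : nat -> Kt k,
        (forall x, a <= x <= b -> Ksum k N (fun i => Kmult k (c i) (e i x)) = Kzero k) ->
        forall i, (i < N)%nat -> c i = Kzero k).

Definition bernstein_basis (k : Kfield) (a b : R) (m : nat) (V : (R -> Kt k) -> Prop)
    (p : nat -> R -> Kt k) : Prop :=
  forall j, (j <= m)%nat ->
    in_sp k a b V (p j) /\ zero_order k a b m (p j) a j /\
    zero_order k a b m (p j) b (m - j).

(* Real-valued functions pt 0..m (viewed in K via KofR) are non-negative
   near a and near b. *)
Definition locally_nonneg (a b : R) (m : nat) (pt : nat -> R -> R) : Prop :=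
  exists del, 0 < del /\ forall j, (j <= m)%nat -> forall x, a <= x <= b ->
    (x < a + del \/ b - del < x) -> 0 <= pt j x.

Definition Kfam (k : Kfield) (pt : nat -> R -> R) : nat -> R -> Kt k :=
  fun j x => KofR k (pt j x).

(* D_{f0} V = { (f / f0)' : f in V }, f0 = KofR o f0t real valued *)
Definition Dspace (k : Kfield) (a b : R) (V : (R -> Kt k) -> Prop) (f0t : R -> R)
    (h : R -> Kt k) : Prop :=
  exists f, in_sp k a b V f /\ forall x, a <= x <= b ->
    deriv_within k a b (fun y => Kscal k (/ f0t y) (f y)) x (h x).

Definition lim_right_at (a b : R) (g : R -> R) (L : R) : Prop :=
  forall eps, 0 < eps -> exists del, 0 < del /\
    forall x, a < x < a + del -> x <= b -> Rabs (g x - L) < eps.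
Definition lim_left_at (a b : R) (g : R -> R) (L : R) : Prop :=
  forall eps, 0 < eps -> exists del, 0 < del /\
    forall x, b - del < x < b -> a <= x -> Rabs (g x - L) < eps.

(* Main.v *)
Require Import Defs.
From Stdlib Require Import Reals Lra Lia.
From Coquelicot Require Import Complex.
Open Scope R_scope.

Definition dw (a b : R) (f : R -> R) (x l : R) : Prop :=
  forall eps, 0 < eps -> exists del, 0 < del /\
    forall y, a <= y <= b -> y <> x -> Rabs (y - x) < del ->
      Rabs (/ (y - x) * (f y - f x) - l) < eps.

Lemma dw_KR a b f x l : deriv_within KR a b f x l <-> dw a b f x l.
Proof. unfold deriv_within, dw; simpl. tauto. Qed.

Definition cw (a b : R) (f : R -> R) (x : R) : Prop :=
  forall eps, 0 < eps -> exists del, 0 < del /\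
    forall y, a <= y <= b -> Rabs (y - x) < del -> Rabs (f y - f x) < eps.

Lemma cw_KR a b f : cont_within KR a b f <-> forall x, a <= x <= b -> cw a b f x.
Proof. unfold cont_within, cw; simpl. tauto. Qed.

Lemma dw_cw a b f x l : dw a b f x l -> cw a b f x.
Proof.
  intros H eps He.
  destruct (H 1 Rlt_0_1) as [d [Hd Hy]].
  exists (Rmin d (eps / (Rabs l + 1))). split.
  { apply Rmin_pos; auto. apply Rdiv_lt_0_compat; auto. pose proof (Rabs_pos l); lra. }
  intros y Hy1 Hy2.
  destruct (Req_dec y x) as [->|Hne].
  { rewrite Rminus_diag, Rabs_R0; auto. }
  assert (Hyd : Rabs (y - x) < d) by (eapply Rlt_le_trans; [exact Hy2| apply Rmin_l]).
  assert (Hye : Rabs (y - x) < eps / (Rabs l + 1)) by (eapply Rlt_le_trans; [exact Hy2| apply Rmin_r]).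
  specialize (Hy y Hy1 Hne Hyd).
  assert (Hnz : y - x <> 0) by lra.
  assert (E : f y - f x = (y - x) * (/ (y - x) * (f y - f x))) by (field; auto).
  rewrite E, Rabs_mult.
  assert (Rabs (/ (y - x) * (f y - f x)) <= Rabs l + 1).
  { pose proof (Rabs_triang (/ (y - x) * (f y - f x) - l) l).
    replace (/ (y - x) * (f y - f x) - l + l) with (/ (y - x) * (f y - f x)) in H0 by ring. lra. }
  pose proof (Rabs_pos l). pose proof (Rabs_pos (y-x)).
  apply Rle_lt_trans with (Rabs (y - x) * (Rabs l + 1)).
  { apply Rmult_le_compat_l; auto. }
  apply (Rmult_lt_compat_r (Rabs l + 1)) in Hye; [|lra].
  unfold Rdiv in Hye. rewrite Rmult_assoc, Rinv_l, Rmult_1_r in Hye; lra.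
Qed.

Lemma dw_interior a b f x l : a < x < b -> dw a b f x l -> derivable_pt_lim f x l.
Proof.
  intros Hx H eps He.
  destruct (H eps He) as [d [Hd Hy]].
  assert (Hp : 0 < Rmin d (Rmin (x - a) (b - x))).
  { repeat apply Rmin_pos; lra. }
  exists (mkposreal _ Hp). intros h Hh Hha. simpl in Hha.
  assert (h1 : Rabs h < d) by (eapply Rlt_le_trans; [exact Hha|apply Rmin_l]).
  assert (h2 : Rabs h < Rmin (x - a) (b - x)) by (eapply Rlt_le_trans; [exact Hha|apply Rmin_r]).
  assert (h3 : Rabs h < x - a) by (eapply Rlt_le_trans; [exact h2|apply Rmin_l]).
  assert (h4 : Rabs h < b - x) by (eapply Rlt_le_trans; [exact h2|apply Rmin_r]).
  apply Rabs_def2 in h3. apply Rabs_def2 in h4.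
  specialize (Hy (x + h) ltac:(lra) ltac:(lra)).
  replace (x + h - x) with h in Hy by ring.
  replace ((f (x + h) - f x) / h) with (/ h * (f (x + h) - f x)) by (unfold Rdiv; ring).
  apply Hy; auto.
Qed.

Lemma dw_unique a b f x l1 l2 : a < b -> a <= x <= b -> dw a b f x l1 -> dw a b f x l2 -> l1 = l2.
Proof.
  intros Hab Hx H1 H2.
  destruct (Req_dec l1 l2) as [|Hne]; auto. exfalso.
  set (e := Rabs (l1 - l2) / 2).
  assert (He : 0 < e) by (unfold e; apply Rdiv_lt_0_compat; [apply Rabs_pos_lt; lra|lra]).
  destruct (H1 e He) as [d1 [Hd1 Hy1]].
  destruct (H2 e He) as [d2 [Hd2 Hy2]].
  set (h := Rmin (Rmin d1 d2) (b - a) / 2).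
  assert (Hh : 0 < h) by (unfold h; apply Rdiv_lt_0_compat; [repeat apply Rmin_pos; lra|lra]).
  assert (Hh1 : h < d1) by (unfold h; pose proof (Rmin_l (Rmin d1 d2) (b-a)); pose proof (Rmin_l d1 d2); lra).
  assert (Hh2 : h < d2) by (unfold h; pose proof (Rmin_l (Rmin d1 d2) (b-a)); pose proof (Rmin_r d1 d2); lra).
  assert (Hh3 : h <= (b - a)/2) by (unfold h; pose proof (Rmin_r (Rmin d1 d2) (b-a)); lra).
  destruct (Rle_dec x ((a + b)/2)) as [Hl|Hl].
  - assert (y1 : a <= x + h <= b) by lra.
    specialize (Hy1 (x + h) y1 ltac:(lra)). specialize (Hy2 (x + h) y1 ltac:(lra)).
    replace (x + h - x) with h in Hy1, Hy2 by ring.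
    rewrite Rabs_pos_eq in Hy1, Hy2 by lra.
    specialize (Hy1 Hh1). specialize (Hy2 Hh2).
    set (q := / h * (f (x + h) - f x)) in *.
    pose proof (Rabs_triang (q - l2) (l1 - q)).
    replace (q - l2 + (l1 - q)) with (l1 - l2) in H by ring.
    rewrite Rabs_minus_sym in Hy1. unfold e in *. lra.
  - assert (y1 : a <= x - h <= b) by lra.
    specialize (Hy1 (x - h) y1 ltac:(lra)). specialize (Hy2 (x - h) y1 ltac:(lra)).
    replace (x - h - x) with (- h) in Hy1, Hy2 by ring.
    rewrite Rabs_Ropp, Rabs_pos_eq in Hy1, Hy2 by lra.
    specialize (Hy1 Hh1). specialize (Hy2 Hh2).
    set (q := / - h * (f (x - h) - f x)) in *.
    pose proof (Rabs_triang (q - l2) (l1 - q)).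
    replace (q - l2 + (l1 - q)) with (l1 - l2) in H by ring.
    rewrite Rabs_minus_sym in Hy1. unfold e in *. lra.
Qed.

Lemma dw_ext a b f g x l : a <= x <= b -> (forall y, a <= y <= b -> f y = g y) -> dw a b f x l -> dw a b g x l.
Proof.
  intros Hx E H eps He. destruct (H eps He) as [d [Hd Hy]]. exists d; split; auto.
  intros y Hy1 Hy2 Hy3. rewrite <- !E; auto.
Qed.

Definition clamp (u v x : R) := Rmax u (Rmin v x).

Lemma clamp_in u v x : u <= v -> u <= clamp u v x <= v.
Proof. intros. unfold clamp, Rmax, Rmin. repeat destruct Rle_dec; lra. Qed.

Lemma clamp_id u v x : u <= x <= v -> clamp u v x = x.
Proof. intros. unfold clamp, Rmax, Rmin. repeat destruct Rle_dec; lra. Qed.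

Lemma clamp_lip u v x y : u <= v -> Rabs (clamp u v y - clamp u v x) <= Rabs (y - x).
Proof. intros. unfold clamp, Rmax, Rmin. repeat destruct Rle_dec; unfold Rabs; repeat destruct Rcase_abs; lra. Qed.

Lemma cw_clamp a b u v f x : a <= u -> u <= v -> v <= b -> u <= x <= v -> cw a b f x ->
  continuity_pt (fun y => f (clamp u v y)) x.
Proof.
  intros Hau Huv Hvb Hx H eps He.
  destruct (H eps He) as [d [Hd Hy]].
  exists d; split; auto. intros y [_ Hy2]. simpl in *. unfold R_dist in *.
  rewrite (clamp_id u v x) by auto.
  apply Hy.
  - pose proof (clamp_in u v y Huv); lra.
  - rewrite <- (clamp_id u v x) by auto. eapply Rle_lt_trans; [apply clamp_lip; auto|auto].
Qed.

Lemma incr a b u v c g g' : a <= u -> u < v -> v <= b ->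
  (forall y, u <= y <= v -> dw a b g y (g' y)) ->
  (forall y, u < y < v -> 0 < c * g' y) -> c * g u < c * g v.
Proof.
  intros Hau Huv Hvb Hd Hp.
  set (h := fun y => g (clamp u v y)).
  assert (Hder : forall y, u < y < v -> derivable_pt_lim h y (g' y)).
  { intros y Hy. unfold h.
    assert (Hl : derivable_pt_lim g y (g' y)) by (apply (dw_interior a b); [lra| apply Hd; lra]).
    intros eps He. destruct (Hl eps He) as [d Hdd].
    assert (Hp' : 0 < Rmin d (Rmin (y - u) (v - y))) by (repeat apply Rmin_pos; try lra; apply cond_pos).
    exists (mkposreal _ Hp'). intros k Hk Hka. simpl in Hka.
    assert (k1 : Rabs k < d) by (eapply Rlt_le_trans; [exact Hka|apply Rmin_l]).
    assert (k2 : Rabs k < Rmin (y - u) (v - y)) by (eapply Rlt_le_trans; [exact Hka|apply Rmin_r]).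
    assert (k3 : Rabs k < y - u) by (eapply Rlt_le_trans; [exact k2|apply Rmin_l]).
    assert (k4 : Rabs k < v - y) by (eapply Rlt_le_trans; [exact k2|apply Rmin_r]).
    apply Rabs_def2 in k3. apply Rabs_def2 in k4.
    rewrite !clamp_id by lra. apply Hdd; auto. }
  assert (pr1 : forall y, u < y < v -> derivable_pt h y) by (intros y Hy; exists (g' y); apply Hder; auto).
  assert (pr2 : forall y, u < y < v -> derivable_pt id y) by (intros y Hy; apply derivable_pt_id).
  destruct (MVT h id u v pr1 pr2 Huv) as [z [Pz Hz]].
  - intros y Hy. unfold h. apply (cw_clamp a b); try lra. eapply dw_cw. apply Hd; auto.
  - intros y Hy. apply derivable_continuous_pt, derivable_pt_id.
  - rewrite (derive_pt_eq_0 h z (g' z) (pr1 z Pz) (Hder z Pz)) in Hz.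
    rewrite (derive_pt_eq_0 id z 1 (pr2 z Pz) (derivable_pt_lim_id z)) in Hz.
    unfold h, id in Hz. rewrite !clamp_id in Hz by lra.
    specialize (Hp z Pz). nra.
Qed.

Definition tower a b m (D : nat -> R -> R) :=
  (forall i, (i < m)%nat -> forall x, a <= x <= b -> dw a b (D i) x (D (S i) x)) /\
  (forall x, a <= x <= b -> cw a b (D m) x).

Lemma tower_cw a b m D i x : tower a b m D -> (i <= m)%nat -> a <= x <= b -> cw a b (D i) x.
Proof.
  intros [H1 H2] Hi Hx. destruct (Nat.eq_dec i m) as [->|Hne]; auto.
  eapply dw_cw. apply H1; auto; lia.
Qed.

Lemma sign_a a b m D r : a < b -> tower a b m D -> (r <= m)%nat ->
  (forall i, (i < r)%nat -> D i a = 0) -> D r a <> 0 ->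
  exists del, 0 < del /\ del < b - a /\
    forall i, (i <= r)%nat -> forall x, a < x <= a + del -> 0 < D r a * D i x.
Proof.
  intros Hab Ht Hr H0 Hnz.
  assert (Hc : cw a b (D r) a) by (apply (tower_cw a b m); auto; lra).
  assert (Hpos : 0 < Rabs (D r a)) by (apply Rabs_pos_lt; auto).
  destruct (Hc _ Hpos) as [d0 [Hd0 Hy]].
  set (del := Rmin d0 (b - a) / 2).
  assert (Hdel : 0 < del) by (unfold del; apply Rdiv_lt_0_compat; [apply Rmin_pos; lra|lra]).
  assert (Hdel1 : del < d0) by (unfold del; pose proof (Rmin_l d0 (b-a)); lra).
  assert (Hdel2 : del < b - a) by (unfold del; pose proof (Rmin_r d0 (b-a)); lra).
  exists del. split; [auto|split; [auto|]].
  assert (Base : forall x, a <= x <= a + del -> 0 < D r a * D r x).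
  { intros x Hx. assert (Hxb : a <= x <= b) by lra.
    specialize (Hy x Hxb ltac:(rewrite Rabs_pos_eq; lra)).
    revert Hy. unfold Rabs. repeat destruct Rcase_abs; intros; nra. }
  assert (Ind : forall t, (t <= r)%nat -> forall x, a < x <= a + del -> 0 < D r a * D (r - t)%nat x).
  { induction t as [|t IH]; intros Ht' x Hx.
    - replace (r - 0)%nat with r by lia. apply Base; lra.
    - set (i := (r - S t)%nat).
      assert (Hi : S i = (r - t)%nat) by (unfold i; lia).
      assert (Hlt : (i < m)%nat) by (unfold i; lia).
      pose proof (incr a b a x (D r a) (D i) (D (S i))) as Hinc.
      rewrite (H0 i) in Hinc by (unfold i; lia).
      rewrite Rmult_0_r in Hinc. apply Hinc; try lra.
      + intros y Hy'. apply (proj1 Ht); auto; lra.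
      + intros y Hy'. rewrite Hi. apply IH; [lia|lra]. }
  intros i Hi x Hx. replace i with (r - (r - i))%nat by lia. apply Ind; auto; lia.
Qed.

Lemma Rabs_sub_le u w : Rabs (u - w) <= Rabs u + Rabs w.
Proof. unfold Rabs; repeat destruct Rcase_abs; lra. Qed.

Lemma dw_lin a b f g c x lf lg : dw a b f x lf -> dw a b g x lg ->
  dw a b (fun y => f y - c * g y) x (lf - c * lg).
Proof.
  intros Hf Hg eps He.
  set (e := eps / (2 * (Rabs c + 1))).
  assert (Hc : 0 < Rabs c + 1) by (pose proof (Rabs_pos c); lra).
  assert (He' : 0 < e) by (unfold e; apply Rdiv_lt_0_compat; lra).
  destruct (Hf e He') as [d1 [Hd1 H1]]. destruct (Hg e He') as [d2 [Hd2 H2]].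
  exists (Rmin d1 d2). split; [apply Rmin_pos; auto|].
  intros y Hy Hne Hd.
  specialize (H1 y Hy Hne (Rlt_le_trans _ _ _ Hd (Rmin_l _ _))).
  specialize (H2 y Hy Hne (Rlt_le_trans _ _ _ Hd (Rmin_r _ _))).
  replace (/ (y - x) * (f y - c * g y - (f x - c * g x)) - (lf - c * lg))
    with ((/ (y - x) * (f y - f x) - lf) - c * (/ (y - x) * (g y - g x) - lg)) by ring.
  eapply Rle_lt_trans; [apply Rabs_sub_le|]. rewrite Rabs_mult.
  pose proof (Rabs_pos c). pose proof (Rabs_pos (/ (y - x) * (g y - g x) - lg)).
  assert (Rabs c * Rabs (/ (y - x) * (g y - g x) - lg) <= Rabs c * e) by (apply Rmult_le_compat_l; lra).
  assert (e * (2 * (Rabs c + 1)) = eps) by (unfold e; field; lra).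
  nra.
Qed.

Lemma cw_lin a b f g c x : cw a b f x -> cw a b g x -> cw a b (fun y => f y - c * g y) x.
Proof.
  intros Hf Hg eps He.
  set (e := eps / (2 * (Rabs c + 1))).
  assert (Hc : 0 < Rabs c + 1) by (pose proof (Rabs_pos c); lra).
  assert (He' : 0 < e) by (unfold e; apply Rdiv_lt_0_compat; lra).
  destruct (Hf e He') as [d1 [Hd1 H1]]. destruct (Hg e He') as [d2 [Hd2 H2]].
  exists (Rmin d1 d2). split; [apply Rmin_pos; auto|].
  intros y Hy Hd.
  specialize (H1 y Hy (Rlt_le_trans _ _ _ Hd (Rmin_l _ _))).
  specialize (H2 y Hy (Rlt_le_trans _ _ _ Hd (Rmin_r _ _))).
  replace (f y - c * g y - (f x - c * g x)) with ((f y - f x) - c * (g y - g x)) by ring.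
  eapply Rle_lt_trans; [apply Rabs_sub_le|]. rewrite Rabs_mult.
  pose proof (Rabs_pos c). pose proof (Rabs_pos (g y - g x)).
  assert (Rabs c * Rabs (g y - g x) <= Rabs c * e) by (apply Rmult_le_compat_l; lra).
  assert (e * (2 * (Rabs c + 1)) = eps) by (unfold e; field; lra).
  nra.
Qed.

Lemma tower_restrict a b m r D : tower a b m D -> (r <= m)%nat -> tower a b r D.
Proof.
  intros Ht Hr. split.
  - intros i Hi x Hx. apply (proj1 Ht); auto; lia.
  - intros x Hx. apply (tower_cw a b m); auto.
Qed.

Lemma tower_lin a b r F G c : tower a b r F -> tower a b r G ->
  tower a b r (fun i x => F i x - c * G i x).
Proof.
  intros [F1 F2] [G1 G2]. split.
  - intros i Hi x Hx. apply dw_lin; auto.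
  - intros x Hx. apply cw_lin; auto.
Qed.

Lemma lim_a a b mF mG F G r : a < b -> tower a b mF F -> tower a b mG G ->
  (r <= mF)%nat -> (r <= mG)%nat ->
  (forall i, (i < r)%nat -> F i a = 0) -> (forall i, (i < r)%nat -> G i a = 0) ->
  G r a <> 0 ->
  lim_right_at a b (fun x => F O x / G O x) (F r a / G r a).
Proof.
  intros Hab HF HG HrF HrG F0 G0 Gnz eps He.
  set (L := F r a / G r a).
  assert (TF := tower_restrict _ _ _ _ _ HF HrF).
  assert (TG := tower_restrict _ _ _ _ _ HG HrG).
  set (s := G r a) in *.
  destruct (sign_a a b r G r Hab TG (le_n r) G0 Gnz) as [d2 [Hd2 [_ S2]]].
  set (c1 := L + eps / 2). set (c2 := L - eps / 2).
  assert (H1a : forall i, (i < r)%nat -> F i a - c1 * G i a = 0) by (intros; rewrite F0, G0 by auto; ring).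
  assert (H2a : forall i, (i < r)%nat -> F i a - c2 * G i a = 0) by (intros; rewrite F0, G0 by auto; ring).
  assert (E1 : F r a - c1 * G r a = - (eps/2) * s) by (unfold c1, L, s; field; auto).
  assert (E2 : F r a - c2 * G r a = (eps/2) * s) by (unfold c2, L, s; field; auto).
  assert (N1 : F r a - c1 * G r a <> 0) by (rewrite E1; apply Rmult_integral_contrapositive; split; lra).
  assert (N2 : F r a - c2 * G r a <> 0) by (rewrite E2; apply Rmult_integral_contrapositive; split; lra).
  destruct (sign_a a b r (fun i x => F i x - c1 * G i x) r Hab (tower_lin _ _ _ _ _ _ TF TG) (le_n r) H1a N1)
    as [d3 [Hd3 [_ S3]]].
  destruct (sign_a a b r (fun i x => F i x - c2 * G i x) r Hab (tower_lin _ _ _ _ _ _ TF TG) (le_n r) H2a N2)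
    as [d4 [Hd4 [_ S4]]].
  exists (Rmin d2 (Rmin d3 d4)). split; [repeat apply Rmin_pos; auto|].
  intros x Hx Hxb.
  pose proof (Rmin_l d2 (Rmin d3 d4)). pose proof (Rmin_r d2 (Rmin d3 d4)).
  pose proof (Rmin_l d3 d4). pose proof (Rmin_r d3 d4).
  specialize (S2 O (Nat.le_0_l r) x ltac:(lra)).
  specialize (S3 O (Nat.le_0_l r) x ltac:(lra)).
  specialize (S4 O (Nat.le_0_l r) x ltac:(lra)).
  cbv beta in S3, S4. rewrite E1 in S3. rewrite E2 in S4. fold s in S2.
  assert (Gx : G O x <> 0) by (intro Z; rewrite Z in S2; lra).
  assert (Q1 : F O x / G O x - c1 = (s * (F O x - c1 * G O x)) / (s * G O x)) by (field; auto).
  assert (Q2 : F O x / G O x - c2 = (s * (F O x - c2 * G O x)) / (s * G O x)) by (field; auto).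
  assert (A1 : s * (F O x - c1 * G O x) < 0) by nra.
  assert (A2 : 0 < s * (F O x - c2 * G O x)) by nra.
  assert (B1 : F O x / G O x - c1 < 0).
  { rewrite Q1. unfold Rdiv. apply Rmult_neg_pos; auto. apply Rinv_0_lt_compat; auto. }
  assert (B2 : 0 < F O x / G O x - c2).
  { rewrite Q2. unfold Rdiv. apply Rmult_lt_0_compat; auto. apply Rinv_0_lt_compat; auto. }
  unfold c1, c2 in *. apply Rabs_def1; lra.
Qed.

Lemma dw_refl a b f x l : dw a b f x l -> dw (-b) (-a) (fun y => f (-y)) (-x) (-l).
Proof.
  intros H eps He. destruct (H eps He) as [d [Hd Hy]]. exists d; split; auto.
  intros y Hy1 Hy2 Hy3.
  specialize (Hy (-y) ltac:(lra) ltac:(lra) ltac:(replace (-y - x) with (-(y - - x)) by ring; rewrite Rabs_Ropp; auto)).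
  replace (/ (y - - x) * (f (- y) - f (- - x)) - - l) with (-(/ (- y - x) * (f (- y) - f x) - l)).
  - rewrite Rabs_Ropp; auto.
  - rewrite Ropp_involutive. field. lra.
Qed.

Lemma cw_refl a b f x : cw a b f x -> cw (-b) (-a) (fun y => f (-y)) (-x).
Proof.
  intros H eps He. destruct (H eps He) as [d [Hd Hy]]. exists d; split; auto.
  intros y Hy1 Hy3. rewrite Ropp_involutive.
  apply Hy; [lra|]. replace (-y - x) with (-(y - - x)) by ring; rewrite Rabs_Ropp; auto.
Qed.

Lemma dw_scal a b f x l s : dw a b f x l -> dw a b (fun y => s * f y) x (s * l).
Proof.
  intros H.
  assert (H0 : dw a b (fun _ => 0) x 0).
  { intros eps He. exists 1; split; [lra|]. intros. rewrite !Rminus_0_r, Rmult_0_r, Rabs_R0; auto. }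
  pose proof (dw_lin a b _ _ (-s) x _ _ H0 H) as H1.
  intros eps He. destruct (H1 eps He) as [d [Hd Hy]]. exists d; split; auto.
  intros y Hy1 Hy2 Hy3. specialize (Hy y Hy1 Hy2 Hy3).
  replace (/ (y - x) * (s * f y - s * f x) - s * l) with
    (/ (y - x) * (0 - - s * f y - (0 - - s * f x)) - (0 - - s * l)) by ring. auto.
Qed.

Lemma cw_scal a b f x s : cw a b f x -> cw a b (fun y => s * f y) x.
Proof.
  intros H.
  assert (H0 : cw a b (fun _ => 0) x).
  { intros eps He. exists 1; split; [lra|]. intros. rewrite Rminus_0_r, Rabs_R0; auto. }
  pose proof (cw_lin a b _ _ (-s) x H0 H) as H1.
  intros eps He. destruct (H1 eps He) as [d [Hd Hy]]. exists d; split; auto.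
  intros y Hy1 Hy2. specialize (Hy y Hy1 Hy2).
  replace (s * f y - s * f x) with (0 - - s * f y - (0 - - s * f x)) by ring. auto.
Qed.

Definition rtow (D : nat -> R -> R) := fun i y => (-1) ^ i * D i (- y).

Lemma tower_refl a b m D : tower a b m D -> tower (-b) (-a) m (rtow D).
Proof.
  intros [H1 H2]. split.
  - intros i Hi y Hy. unfold rtow.
    replace y with (- - y) at 1 by ring.
    pose proof (dw_scal _ _ _ _ _ ((-1)^i) (dw_refl a b (D i) (-y) _ (H1 i Hi (-y) ltac:(lra)))) as H.
    simpl. replace (-1 * (-1) ^ i * D (S i) (- y)) with ((-1) ^ i * - D (S i) (- y)) by ring.
    exact H.
  - intros y Hy. unfold rtow. replace y with (- - y) at 1 by ring.
    apply cw_scal. apply cw_refl. apply H2. lra.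
Qed.

Lemma sign_b a b m D r : a < b -> tower a b m D -> (r <= m)%nat ->
  (forall i, (i < r)%nat -> D i b = 0) -> D r b <> 0 ->
  exists del, 0 < del /\ del < b - a /\
    forall i, (i <= r)%nat -> forall x, b - del <= x < b -> 0 < ((-1) ^ r * D r b) * ((-1) ^ i * D i x).
Proof.
  intros Hab Ht Hr H0 Hnz.
  assert (Hp : forall i, (-1) ^ i <> 0) by (intro; apply pow_nonzero; lra).
  destruct (sign_a (-b) (-a) m (rtow D) r ltac:(lra) (tower_refl _ _ _ _ Ht) Hr) as [d [Hd [Hd2 S]]].
  - intros i Hi. unfold rtow. rewrite Ropp_involutive, H0; auto; ring.
  - unfold rtow. rewrite Ropp_involutive. apply Rmult_integral_contrapositive; split; auto.
  - exists d; split; [auto|split; [lra|]]. intros i Hi x Hx.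
    specialize (S i Hi (-x) ltac:(lra)). unfold rtow in S. rewrite !Ropp_involutive in S. exact S.
Qed.

Lemma lim_b a b mF mG F G r : a < b -> tower a b mF F -> tower a b mG G ->
  (r <= mF)%nat -> (r <= mG)%nat ->
  (forall i, (i < r)%nat -> F i b = 0) -> (forall i, (i < r)%nat -> G i b = 0) ->
  G r b <> 0 ->
  lim_left_at a b (fun x => F O x / G O x) (F r b / G r b).
Proof.
  intros Hab HF HG HrF HrG F0 G0 Gnz.
  assert (Hp : forall i, (-1) ^ i <> 0) by (intro; apply pow_nonzero; lra).
  pose proof (lim_a (-b) (-a) mF mG (rtow F) (rtow G) r ltac:(lra) (tower_refl _ _ _ _ HF)
     (tower_refl _ _ _ _ HG) HrF HrG) as L.
  unfold rtow in L. rewrite !Ropp_involutive in L.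
  assert (E : (-1) ^ r * F r b / ((-1) ^ r * G r b) = F r b / G r b) by (field; auto).
  rewrite E in L.
  assert (L' : lim_right_at (- b) (- a)
       (fun x : R => (-1) ^ 0 * F 0%nat (- x) / ((-1) ^ 0 * G 0%nat (- x))) (F r b / G r b)).
  { apply L.
    - intros i Hi. rewrite F0; auto; ring.
    - intros i Hi. rewrite G0; auto; ring.
    - apply Rmult_integral_contrapositive; split; auto. }
  intros eps He. destruct (L' eps He) as [d [Hd Hy]].
  - exists d; split; auto. intros x Hx Hxa.
    specialize (Hy (-x) ltac:(lra) ltac:(lra)). simpl in Hy.
    rewrite !Rmult_1_l, !Ropp_involutive in Hy. exact Hy.
Qed.

Lemma im_le_Cmod (c : C) : Rabs (Im c) <= Cmod c.
Proof.
  pose proof (Cmod2_alt c). pose proof (Cmod_ge_0 c). pose proof (Rabs_pos (Im c)).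
  assert (Rabs (Im c) ^ 2 = Im c ^ 2) by (unfold Rabs; destruct Rcase_abs; ring).
  destruct (Rle_dec (Rabs (Im c)) (Cmod c)); auto. nra.
Qed.

Lemma dwC_re a b (f : R -> C) x l : deriv_within KC a b f x l -> dw a b (fun y => fst (f y)) x (fst l).
Proof.
  intros H eps He. destruct (H eps He) as [d [Hd Hy]]. exists d; split; auto.
  intros y Hy1 Hy2 Hy3. specialize (Hy y Hy1 Hy2 Hy3).
  eapply Rle_lt_trans; [|exact Hy]. simpl.
  destruct (f y) as [u1 u2]; destruct (f x) as [w1 w2]; destruct l as [l1 l2].
  match goal with |- _ <= Cmod ?z => pose proof (re_le_Cmod z) as R end.
  eapply Rle_trans; [|exact R]. unfold Re. simpl. right. f_equal. ring.
Qed.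

Lemma dwC_im a b (f : R -> C) x l : deriv_within KC a b f x l -> dw a b (fun y => snd (f y)) x (snd l).
Proof.
  intros H eps He. destruct (H eps He) as [d [Hd Hy]]. exists d; split; auto.
  intros y Hy1 Hy2 Hy3. specialize (Hy y Hy1 Hy2 Hy3).
  eapply Rle_lt_trans; [|exact Hy]. simpl.
  destruct (f y) as [u1 u2]; destruct (f x) as [w1 w2]; destruct l as [l1 l2].
  match goal with |- _ <= Cmod ?z => pose proof (im_le_Cmod z) as R end.
  eapply Rle_trans; [|exact R]. unfold Im. simpl. right. f_equal. ring.
Qed.

Lemma cwC_re a b (f : R -> C) : cont_within KC a b f -> forall x, a <= x <= b -> cw a b (fun y => fst (f y)) x.
Proof.
  intros H x Hx eps He. destruct (H x Hx eps He) as [d [Hd Hy]]. exists d; split; auto.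
  intros y Hy1 Hy2. specialize (Hy y Hy1 Hy2).
  eapply Rle_lt_trans; [|exact Hy]. simpl.
  destruct (f y) as [u1 u2]; destruct (f x) as [w1 w2].
  match goal with |- _ <= Cmod ?z => pose proof (re_le_Cmod z) as R end.
  eapply Rle_trans; [|exact R]. unfold Re. simpl. right. reflexivity.
Qed.

Lemma zero_order_real k a b m (p : R -> R) c j : a < b -> a <= c <= b ->
  zero_order k a b m (fun x => KofR k (p x)) c j ->
  exists D, tower a b m D /\ (forall x, a <= x <= b -> D O x = p x) /\ (j <= m)%nat /\
    (forall i, (i < j)%nat -> D i c = 0) /\ D j c <> 0.
Proof.
  intros Hab Hc [D [[T0 [T1 T2]] [Hj [Hz Hnz]]]].
  destruct k.
  - exists D. simpl in *. split; [split|].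
    + intros i Hi x Hx. apply dw_KR. apply T1; auto.
    + apply cw_KR. exact T2.
    + auto.
  - set (D' := fun i x => fst (D i x)).
    assert (Im0 : forall i, (i <= m)%nat -> forall x, a <= x <= b -> snd (D i x) = 0).
    { induction i as [|i IH]; intros Hi x Hx.
      - rewrite T0 by auto. reflexivity.
      - assert (H1 := dwC_im a b (D i) x _ (T1 i ltac:(lia) x Hx)).
        assert (H2 : dw a b (fun y => snd (D i y)) x 0).
        { intros eps He. exists 1; split; [lra|]. intros y Hy _ _.
          rewrite !IH by (auto; lia). replace (/ (y - x) * (0 - 0) - 0) with 0 by ring; rewrite Rabs_R0; auto. }
        exact (dw_unique a b _ x _ _ Hab Hx H1 H2). }
    exists D'. split; [split|split; [|split; [auto|split]]].
    + intros i Hi x Hx. apply dwC_re. apply T1; auto.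
    + apply cwC_re. exact T2.
    + intros x Hx. unfold D'. rewrite T0 by auto. reflexivity.
    + intros i Hi. unfold D'. rewrite Hz by auto. reflexivity.
    + unfold D'. intro Z. apply Hnz. pose proof (Im0 j Hj c Hc) as I.
      destruct (D j c) as [u v]. simpl in *. subst. reflexivity.
Qed.

Lemma pos_a a b m D r : a < b -> tower a b m D -> (r <= m)%nat ->
  (forall i, (i < r)%nat -> D i a = 0) -> D r a <> 0 ->
  (exists d0, 0 < d0 /\ forall x, a < x < a + d0 -> x <= b -> 0 <= D O x) -> 0 < D r a.
Proof.
  intros Hab Ht Hr H0 Hnz [d0 [Hd0 Hn]].
  destruct (sign_a a b m D r Hab Ht Hr H0 Hnz) as [d [Hd [Hd2 S]]].
  set (x := a + Rmin d (d0 / 2)).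
  assert (Hm1 := Rmin_l d (d0/2)). assert (Hm2 := Rmin_r d (d0/2)).
  assert (Hm : 0 < Rmin d (d0/2)) by (apply Rmin_pos; lra).
  specialize (S O (Nat.le_0_l r) x ltac:(unfold x; lra)).
  specialize (Hn x ltac:(unfold x; lra) ltac:(unfold x; lra)).
  destruct (Rlt_le_dec 0 (D r a)); auto. nra.
Qed.

Lemma pos_b a b m D r : a < b -> tower a b m D -> (r <= m)%nat ->
  (forall i, (i < r)%nat -> D i b = 0) -> D r b <> 0 ->
  (exists d0, 0 < d0 /\ forall x, b - d0 < x < b -> a <= x -> 0 <= D O x) -> 0 < (-1) ^ r * D r b.
Proof.
  intros Hab Ht Hr H0 Hnz [d0 [Hd0 Hn]].
  destruct (sign_b a b m D r Hab Ht Hr H0 Hnz) as [d [Hd [Hd2 S]]].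
  set (x := b - Rmin d (d0 / 2)).
  assert (Hm1 := Rmin_l d (d0/2)). assert (Hm2 := Rmin_r d (d0/2)).
  assert (Hm : 0 < Rmin d (d0/2)) by (apply Rmin_pos; lra).
  specialize (S O (Nat.le_0_l r) x ltac:(unfold x; lra)).
  specialize (Hn x ltac:(unfold x; lra) ltac:(unfold x; lra)).
  simpl in S. destruct (Rlt_le_dec 0 ((-1) ^ r * D r b)); auto. nra.
Qed.

Lemma tower_shift a b m D : tower a b (S m) D -> tower a b m (fun i => D (S i)).
Proof.
  intros [H1 H2]. split.
  - intros i Hi x Hx. apply H1; auto; lia.
  - auto.
Qed.

Lemma fin_min (N : nat) (P : nat -> R -> Prop) :
  (forall j d d', 0 < d' <= d -> P j d -> P j d') ->
  (forall j, (j < N)%nat -> exists d, 0 < d /\ P j d) ->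
  exists d, 0 < d /\ forall j, (j < N)%nat -> P j d.
Proof.
  intros Hm. induction N as [|N IH]; intros H.
  - exists 1. split; [lra|]. intros; lia.
  - destruct IH as [d1 [Hd1 P1]]. { intros j Hj. apply H. lia. }
    destruct (H N ltac:(lia)) as [d2 [Hd2 P2]].
    exists (Rmin d1 d2). split; [apply Rmin_pos; auto|].
    intros j Hj. destruct (Nat.eq_dec j N) as [->|Hne].
    + apply (Hm N d2); auto. split; [apply Rmin_pos; auto|apply Rmin_r].
    + apply (Hm j d1); [split; [apply Rmin_pos; auto|apply Rmin_l]|]. apply P1. lia.
Qed.

Lemma deriv_is a b m D (p : R -> R) x d : a < b -> (0 < m)%nat -> tower a b m D ->
  (forall y, a <= y <= b -> D O y = p y) -> a <= x <= b ->
  deriv_within KR a b p x d -> d = D 1%nat x.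
Proof.
  intros Hab Hm Ht E Hx Hd. apply dw_KR in Hd.
  apply (dw_unique a b p x); auto.
  apply (dw_ext a b (D O)); auto. apply (proj1 Ht); auto.
Qed.

Lemma lim_right_ext a b g h L : (forall x, a < x <= b -> g x = h x) ->
  lim_right_at a b g L -> lim_right_at a b h L.
Proof.
  intros E H eps He. destruct (H eps He) as [d [Hd Hy]]. exists d; split; auto.
  intros x Hx Hxb. rewrite <- E by lra. auto.
Qed.

Lemma lim_left_ext a b g h L : (forall x, a <= x < b -> g x = h x) ->
  lim_left_at a b g L -> lim_left_at a b h L.
Proof.
  intros E H eps He. destruct (H eps He) as [d [Hd Hy]]. exists d; split; auto.
  intros x Hx Hxb. rewrite <- E by lra. auto.
Qed.

Theorem lemma6 (k : Kfield) (a b : R) (n : nat) (U : (R -> Kt k) -> Prop)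
    (pt : nat -> R -> R) :
  a < b ->
  subspace_Cn k a b n U ->
  has_dim k a b U (S n) ->
  bernstein_basis k a b n U (Kfam k pt) ->
  locally_nonneg a b n pt ->
  (exists del, 0 < del /\
     (forall j, (j < n)%nat -> forall x, b - del <= x < b -> a <= x ->
        forall d, deriv_within KR a b (pt j) x d -> d < 0) /\
     (forall j, (1 <= j <= n)%nat -> forall x, a < x <= a + del -> x <= b ->
        forall d, deriv_within KR a b (pt j) x d -> 0 < d)) /\
  (forall (f0t : R -> R) (qt : nat -> R -> R),
     in_sp k a b U (fun x => KofR k (f0t x)) ->
     (forall x, a <= x <= b -> 0 < f0t x) ->
     bernstein_basis k a b (n - 1) (Dspace k a b U f0t) (Kfam k qt) ->
     locally_nonneg a b (n - 1) qt ->
     (forall j, (1 <= j <= n)%nat -> forall dp : R -> R,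
        (forall x, a <= x <= b -> deriv_within KR a b (pt j) x (dp x)) ->
        exists L, lim_right_at a b (fun x => dp x / qt (j - 1)%nat x) L /\
                  0 < L / f0t a) /\
     (forall j, (j < n)%nat -> forall dp : R -> R,
        (forall x, a <= x <= b -> deriv_within KR a b (pt j) x (dp x)) ->
        exists L, lim_left_at a b (fun x => dp x / qt j x) L /\
                  L / f0t b < 0)).
Proof.
  intros Hab _ _ Hbern [dl [Hdl Hnn]].
  assert (Ha : a <= a <= b) by lra. assert (Hb : a <= b <= b) by lra.
  assert (towA : forall j, (j <= n)%nat -> exists D, tower a b n D /\
     (forall x, a <= x <= b -> D O x = pt j x) /\ (j <= n)%nat /\
     (forall i, (i < j)%nat -> D i a = 0) /\ D j a <> 0).
  { intros j Hj. apply (zero_order_real k a b n (pt j) a j Hab Ha). apply (Hbern j Hj). }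
  assert (towB : forall j, (j <= n)%nat -> exists D, tower a b n D /\
     (forall x, a <= x <= b -> D O x = pt j x) /\ (n - j <= n)%nat /\
     (forall i, (i < n - j)%nat -> D i b = 0) /\ D (n - j)%nat b <> 0).
  { intros j Hj. apply (zero_order_real k a b n (pt j) b (n - j) Hab Hb). apply (Hbern j Hj). }
  assert (nnA : forall j (D : nat -> R -> R), (j <= n)%nat -> (forall x, a <= x <= b -> D O x = pt j x) ->
     exists d0, 0 < d0 /\ forall x, a < x < a + d0 -> x <= b -> 0 <= D O x).
  { intros j D Hj E. exists dl. split; auto. intros x Hx Hxb. rewrite E by lra.
    apply Hnn; auto; lra. }
  assert (nnB : forall j (D : nat -> R -> R), (j <= n)%nat -> (forall x, a <= x <= b -> D O x = pt j x) ->
     exists d0, 0 < d0 /\ forall x, b - d0 < x < b -> a <= x -> 0 <= D O x).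
  { intros j D Hj E. exists dl. split; auto. intros x Hx Hxb. rewrite E by lra.
    apply Hnn; auto; lra. }
  split.
  - destruct (fin_min n (fun j d => forall x, b - d <= x < b -> a <= x ->
        forall d0, deriv_within KR a b (pt j) x d0 -> d0 < 0)) as [d1 [Hd1 P1]].
    + intros j d d' Hd H x Hx. apply H. lra.
    + intros j Hj. destruct (towB j ltac:(lia)) as [D [T [E [Hr [Z NZ]]]]].
      assert (Ps := pos_b a b n D (n - j) Hab T Hr Z NZ (nnB j D ltac:(lia) E)).
      destruct (sign_b a b n D (n - j) Hab T Hr Z NZ) as [d [Hd [_ S]]].
      exists d. split; auto. intros x Hx Hxa d0 Hd0.
      rewrite (deriv_is a b n D (pt j) x d0 Hab ltac:(lia) T E ltac:(lra) Hd0).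
      specialize (S 1%nat ltac:(lia) x Hx). simpl in S. nra.
    + destruct (fin_min (S n) (fun j d => (1 <= j)%nat -> forall x, a < x <= a + d -> x <= b ->
        forall d0, deriv_within KR a b (pt j) x d0 -> 0 < d0)) as [d2 [Hd2 P2]].
      * intros j d d' Hd H Hj x Hx. apply H; auto. lra.
      * intros j Hj. destruct (Nat.eq_dec j 0) as [->|Hj0].
        { exists 1. split; [lra|]. intros; lia. }
        destruct (towA j ltac:(lia)) as [D [T [E [Hr [Z NZ]]]]].
        assert (Ps := pos_a a b n D j Hab T Hr Z NZ (nnA j D ltac:(lia) E)).
        destruct (sign_a a b n D j Hab T Hr Z NZ) as [d [Hd [_ S]]].
        exists d. split; auto. intros _ x Hx Hxb d0 Hd0.
        rewrite (deriv_is a b n D (pt j) x d0 Hab ltac:(lia) T E ltac:(lra) Hd0).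
        specialize (S 1%nat ltac:(lia) x Hx). nra.
      * exists (Rmin d1 d2). split; [apply Rmin_pos; auto|]. split.
        { intros j Hj x Hx Hxa d0 Hd0. apply (P1 j Hj x); auto.
          pose proof (Rmin_l d1 d2). lra. }
        { intros j Hj x Hx Hxb d0 Hd0. apply (P2 j ltac:(lia) ltac:(lia) x); auto.
          pose proof (Rmin_r d1 d2). lra. }
  - intros f0t qt _ Hpos Hq [ql [Hql Hqn]]. split.
    + intros j Hj dp Hdp.
      destruct n as [|n']; [lia|]. replace (S n' - 1)%nat with n' in * by lia.
      destruct (towA j ltac:(lia)) as [D [T [E [Hr [Z NZ]]]]].
      destruct (zero_order_real k a b n' (qt (j - 1)%nat) a (j - 1) Hab Ha
                  (proj1 (proj2 (Hq (j - 1)%nat ltac:(lia))))) as [Q [TQ [EQ [HrQ [ZQ NZQ]]]]].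
      assert (PD := pos_a a b (S n') D j Hab T Hr Z NZ (nnA j D ltac:(lia) E)).
      assert (PQ : 0 < Q (j - 1)%nat a).
      { apply (pos_a a b n' Q (j - 1)%nat Hab TQ HrQ ZQ NZQ).
        exists ql. split; auto. intros x Hx Hxb. rewrite EQ by lra. apply Hqn; auto; lra. }
      exists (D j a / Q (j - 1)%nat a). split.
      * pose proof (lim_a a b n' n' (fun i => D (S i)) Q (j - 1)%nat Hab (tower_shift _ _ _ _ T) TQ
           ltac:(lia) ltac:(lia)) as L.
        cbv beta in L. replace (S (j - 1)) with j in L by lia.
        apply (lim_right_ext a b (fun x => D 1%nat x / Q O x)).
        { intros x Hx. rewrite EQ by lra.
          rewrite <- (deriv_is a b (S n') D (pt j) x (dp x) Hab ltac:(lia) T E ltac:(lra) (Hdp x ltac:(lra))).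
          reflexivity. }
        apply L; auto. intros i Hi. apply Z. lia.
      * assert (0 < f0t a) by (apply Hpos; lra). unfold Rdiv. apply Rmult_lt_0_compat; [apply Rmult_lt_0_compat|]; auto; apply Rinv_0_lt_compat; auto.
    + intros j Hj dp Hdp.
      destruct n as [|n']; [lia|]. replace (S n' - 1)%nat with n' in * by lia.
      destruct (towB j ltac:(lia)) as [D [T [E [Hr [Z NZ]]]]].
      destruct (zero_order_real k a b n' (qt j) b (n' - j) Hab Hb
                  (proj2 (proj2 (Hq j ltac:(lia))))) as [Q [TQ [EQ [HrQ [ZQ NZQ]]]]].
      assert (PD := pos_b a b (S n') D (S n' - j) Hab T Hr Z NZ (nnB j D ltac:(lia) E)).
      assert (PQ : 0 < (-1) ^ (n' - j) * Q (n' - j)%nat b).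
      { apply (pos_b a b n' Q (n' - j)%nat Hab TQ HrQ ZQ NZQ).
        exists ql. split; auto. intros x Hx Hxb. rewrite EQ by lra. apply Hqn; [lia|lra|lra]. }
      replace (S n' - j)%nat with (S (n' - j)) in * by lia.
      exists (D (S (n' - j)) b / Q (n' - j)%nat b). split.
      * pose proof (lim_b a b n' n' (fun i => D (S i)) Q (n' - j)%nat Hab (tower_shift _ _ _ _ T) TQ
           ltac:(lia) ltac:(lia)) as L.
        apply (lim_left_ext a b (fun x => D 1%nat x / Q O x)).
        { intros x Hx. rewrite EQ by lra.
          rewrite <- (deriv_is a b (S n') D (pt j) x (dp x) Hab ltac:(lia) T E ltac:(lra) (Hdp x ltac:(lra))).
          reflexivity. }
        apply L; auto. intros i Hi. apply Z. lia.
      * set (A := (-1) ^ (n' - j)) in *. simpl in PD. fold A in PD.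
        assert (Hf : 0 < f0t b) by (apply Hpos; lra).
        assert (HQ : Q (n' - j)%nat b <> 0) by auto.
        assert (HA : A <> 0) by (unfold A; apply pow_nonzero; lra).
        assert (Ee : D (S (n' - j)) b / Q (n' - j)%nat b / f0t b =
                  (A * D (S (n' - j)) b) * / (A * Q (n' - j)%nat b) * / f0t b) by (field; auto; lra).
        rewrite Ee. apply Rmult_neg_pos; [|apply Rinv_0_lt_compat; auto].
        apply Rmult_neg_pos; [nra|apply Rinv_0_lt_compat; auto].
Qed.
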